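(* Let $\mathcal U$ be a finite set with $|\mathcal U|=n$, let $V'\subseteq\mathbb{R}^{\mathcal U}$ be a linear subspace, and let $f_0\in\mathbb{R}^{\mathcal U}$ be nonzero with support $S=\{u:f_0(u)\neq0\}$ satisfying $|S|\le\mu n$ for some $\mu>0$. Let $V=\mathrm{span}(V'\cup\{f_0\})$ and let $f\in\mathbb{R}^{\mathcal U}$ be nonzero. Suppose there are $\alpha>0$, $\epsilon\in[0,1)$ and $\eta\ge0$ such that: (i) $\|f'\|_2\le\alpha\|f'\|_1$ for all $f'\in V'$; (ii) $\langle f_0,f\rangle\ge(1-\epsilon)\|f_0\|_2\|f\|_2$; (iii) $\langle f',f\rangle\le\eta\|f'\|_2\|f\|_2$ for all $f'\in V'$; (iv) $\dfrac{\eta}{1-\epsilon}<\dfrac{1}{\alpha\sqrt{\mu}}-2$. Then $f_0/\langle f_0,f\rangle$ is the unique optimal solution of the linear program $\min\{\|y\|_1: y\in V,\ \langle y,f\rangle=1\}$.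
   Context: All norms and inner products use the uniform (expectation) measure on $\mathcal U$: $\langle g,h\rangle=\mathbb{E}_{u\in\mathcal U}g(u)h(u)$, $\|g\|_p=(\mathbb{E}_{u\in\mathcal U}|g(u)|^p)^{1/p}$. *)

(* Defs.v *)
(* Functions U -> R are finite functions {ffun U -> R^o},
   which form a finite-dimensional R-vector space; subspaces are {vspace _}. *)
From HB Require Import structures.
From mathcomp Require Import all_boot all_order all_algebra.
Set Implicit Arguments. Unset Strict Implicit. Unset Printing Implicit Defensive.
Import Order.TTheory GRing.Theory Num.Theory.
Local Open Scope ring_scope.

Notation fspace U R := {ffun U -> R^o}.

Definition mean (R : numFieldType) (U : finType) (g : U -> R) : R :=
  (#|U|%:R)^-1 * \sum_(u : U) g u.

Definition inner (R : numFieldType) (U : finType) (g h : fspace U R) : R :=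
  mean (fun u => g u * h u).

Definition norm1 (R : numFieldType) (U : finType) (g : fspace U R) : R :=
  mean (fun u => `|g u|).

Definition norm2 (R : rcfType) (U : finType) (g : fspace U R) : R :=
  Num.sqrt (mean (fun u => g u ^+ 2)).

Definition supp (R : numFieldType) (U : finType) (g : fspace U R) : {set U} :=
  [set u | g u != 0].

Definition unique_LP_optimum (R : rcfType) (U : finType)
    (V : {vspace fspace U R}) (f y0 : fspace U R) : Prop :=
  [/\ y0 \in V, inner y0 f = 1 &
      forall y, y \in V -> inner y f = 1 -> y != y0 -> norm1 y0 < norm1 y].

(* Main.v *)
Require Import Defs.
From HB Require Import structures.
From mathcomp Require Import all_boot all_order all_algebra.
From mathcomp Require Import ring lra.
Import Order.TTheory GRing.Theory Num.Theory.
Local Open Scope ring_scope.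

Section Helpers.
Variables (R : rcfType) (U : finType).
Implicit Types (g h : U -> R).

Lemma mean_ext g h : (forall u, g u = h u) -> mean g = mean h.
Proof. by move=> e; rewrite /mean; congr (_ * _); apply: eq_bigr => u _. Qed.

Lemma mean_add g h : mean (fun u => g u + h u) = mean g + mean h.
Proof. by rewrite /mean big_split mulrDr. Qed.

Lemma mean_scale c g : mean (fun u => c * g u) = c * mean g.
Proof. by rewrite /mean -mulr_sumr mulrCA. Qed.

Lemma mean_le g h : (forall u, g u <= h u) -> mean g <= mean h.
Proof.
move=> le; rewrite /mean ler_wpM2l ?invr_ge0 ?ler0n //.
by apply: ler_sum => u _.
Qed.

Lemma mean_ge0 g : (forall u, 0 <= g u) -> 0 <= mean g.
Proof.
move=> le; rewrite /mean mulr_ge0 ?invr_ge0 ?ler0n //.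
by apply: sumr_ge0 => u _.
Qed.

Lemma mean_gt0 g : (forall u, 0 <= g u) -> forall u0, 0 < g u0 -> 0 < mean g.
Proof.
move=> le u0 lt; rewrite /mean mulr_gt0 //.
  rewrite invr_gt0 ltr0n; apply/card_gt0P; by exists u0.
rewrite (bigD1 u0) //=; apply: ltr_wpDr => //.
by apply: sumr_ge0 => u _.
Qed.

Lemma cs g h : mean (fun u => g u * h u) <=
  Num.sqrt (mean (fun u => g u ^+ 2)) * Num.sqrt (mean (fun u => h u ^+ 2)).
Proof.
set A := mean (fun u => g u ^+ 2); set B := mean (fun u => h u ^+ 2).
set C := mean (fun u => g u * h u).
have A0 : 0 <= A by apply: mean_ge0 => u; exact: sqr_ge0.
have B0 : 0 <= B by apply: mean_ge0 => u; exact: sqr_ge0.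
have key : forall t, 0 <= t ^+ 2 * A - 2 * t * C + B.
  move=> t.
  have -> : t ^+ 2 * A - 2 * t * C + B = mean (fun u => (t * g u - h u) ^+ 2).
    rewrite (@mean_ext _ (fun u => t ^+ 2 * g u ^+ 2 + ((- (2 * t)) * (g u * h u) + h u ^+ 2))); last first.
      by move=> u; ring.
    rewrite mean_add mean_add !mean_scale /A /B /C; ring.
  by apply: mean_ge0 => u; exact: sqr_ge0.
have [C0|C0] := lerP C 0.
  by apply: le_trans C0 _; rewrite mulr_ge0 ?sqrtr_ge0.
have CAB : C ^+ 2 <= A * B.
  have [A00|A00] := eqVneq A 0.
    have := key ((B + 1) / (2 * C)).
    rewrite A00 mulr0 add0r.
    have -> : 2 * ((B + 1) / (2 * C)) * C = B + 1.
      have h2 : 2 * C != 0 by rewrite mulf_neq0 ?pnatr_eq0 // gt_eqF.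
      by field; rewrite gt_eqF.
    move=> hh; exfalso; lra.
  have Ap : 0 < A by rewrite lt_def A00.
  have := key (C / A).
  have -> : (C / A) ^+ 2 * A - 2 * (C / A) * C + B = (A * B - C ^+ 2) / A.
    by field.
  by rewrite pmulr_lge0 ?invr_gt0 // subr_ge0.
rewrite -sqrtrM // -(ger0_norm (ltW C0)) -sqrtr_sqr ler_sqrt //.
exact: mulr_ge0.
Qed.



Lemma ffun_neq0 (g : fspace U R) : g != 0 -> exists u, g u != 0.
Proof.
move=> gn; apply/existsP; apply: contraNT gn; rewrite negb_exists => /forallP H.
by apply/eqP/ffunP => u; rewrite ffunE; move: (H u); rewrite negbK => /eqP.
Qed.

Lemma norm2_gt0 (g : fspace U R) : g != 0 -> 0 < norm2 g.
Proof.
move=> /ffun_neq0 [u gu]; rewrite /norm2 sqrtr_gt0.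
apply: (mean_gt0 _ _ u); first by move=> v; exact: sqr_ge0.
by rewrite exprn_even_gt0.
Qed.

Lemma norm1_gt0 (g : fspace U R) : g != 0 -> 0 < norm1 g.
Proof.
move=> /ffun_neq0 [u gu]; rewrite /norm1.
apply: (mean_gt0 _ _ u); first by move=> v.
by rewrite normr_gt0.
Qed.

Lemma norm1_ge0 (g : fspace U R) : 0 <= norm1 g.
Proof. by apply: mean_ge0. Qed.

Lemma norm2_ge0 (g : fspace U R) : 0 <= norm2 g.
Proof. exact: sqrtr_ge0. Qed.

Lemma keyS (g : fspace U R) (S : {set U}) (mu : R) n :
  #|U| = n -> 0 <= mu -> (#|S|%:R : R) <= mu * n%:R ->
  mean (fun u => `|g u| * (u \in S)%:R) <= norm2 g * Num.sqrt mu.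
Proof.
move=> hn hmu hS; apply: le_trans (cs _ _) _.
rewrite /norm2 (@mean_ext (fun u => `|g u| ^+ 2) (fun u => g u ^+ 2)); last first.
  by move=> u; rewrite real_normK ?num_real.
apply: ler_wpM2l; first exact: sqrtr_ge0.
rewrite ler_sqrt //.
rewrite (@mean_ext _ (fun u => (u \in S)%:R)); last by move=> u; case: (u \in S); rewrite ?expr0n ?expr1n.
rewrite /mean.
have -> : \sum_u ((u \in S)%:R : R) = #|S|%:R.
  rewrite -sum1_card natr_sum [RHS]big_mkcond; apply: eq_bigr => u _; by case: (u \in S).
rewrite hn; case: n {hn} hS => [|n] hS; first by rewrite invr0 mul0r.
by rewrite mulrC ler_pdivrMr ?ltr0n.
Qed.

End Helpers.


Theorem theorem5p3 (R : rcfType) (U : finType) (n : nat) (hn : #|U| = n)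
    (V' : {vspace fspace U R}) (f0 f : fspace U R) (mu alpha eps eta : R)
    (hf0 : f0 != 0) (hmu : 0 < mu) (hS : (#|supp f0|%:R : R) <= mu * n%:R)
    (hf : f != 0) (halpha : 0 < alpha) (heps0 : 0 <= eps) (heps1 : eps < 1)
    (heta : 0 <= eta)
    (hi : forall f', f' \in V' -> norm2 f' <= alpha * norm1 f')
    (hii : inner f0 f >= (1 - eps) * norm2 f0 * norm2 f)
    (hiii : forall f', f' \in V' -> inner f' f <= eta * norm2 f' * norm2 f)
    (hiv : eta / (1 - eps) < (alpha * Num.sqrt mu)^-1 - 2) :
  unique_LP_optimum (V' + <[f0]>)%VS f ((inner f0 f)^-1 *: f0).
Proof.
set c := inner f0 f in hii *.
have N20p := @norm2_gt0 _ _ _ hf0; have N2p := @norm2_gt0 _ _ _ hf.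
have c0 : 0 < c.
  apply: lt_le_trans hii; rewrite mulr_gt0 // mulr_gt0 //; lra.
have inner_lin : forall (g : fspace U R) t, inner (g + t *: f0) f = inner g f + t * c.
  move=> g t; rewrite /inner /c -mean_scale -mean_add; apply: mean_ext => u.
  rewrite !ffunE /= -[t *: f0 u]/(t * f0 u); ring.
split.
- rewrite -[_ *: f0]add0r; apply: memv_add; first exact: mem0v.
  exact: memvZ (memv_line f0).
- have := inner_lin 0 c^-1; rewrite add0r => ->.
  rewrite /inner /mean big1 ?mulr0 ?add0r ?mulVf ?gt_eqF //.
  by move=> u _; rewrite ffunE mul0r.
move=> y /memv_addP [f' hf' [z /vlineP [t ->] ->]] hy hne.
rewrite inner_lin in hy.
have i0 : inner 0 f = 0.
  by rewrite /inner /mean big1 ?mulr0 // => u _; rewrite ffunE mul0r.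
have f'0 : f' != 0.
  apply: contraNneq hne => e; rewrite e add0r; suff -> : t = c^-1 by [].
  move: hy; rewrite e i0 add0r => htc.
  by apply: (mulIf (lt0r_neq0 c0)); rewrite htc mulVf ?gt_eqF.
have H3 := hi f' hf'.
have H6 := hiii f' hf'.
set S := supp f0.
set s := Num.sqrt mu.
have s0 : 0 < s by rewrite sqrtr_gt0.
set N10 := norm1 f0; set N20 := norm2 f0 in hii N20p *; set N2f := norm2 f in hii H6 N2p *.
set a := norm1 f' in H3 *; set N2' := norm2 f' in H3 H6 *.
set B := mean (fun u => `|f' u| * (u \in S)%:R).
set L := norm1 (f' + t *: f0).
have a0 : 0 < a by apply: norm1_gt0.
have N2'0 : 0 <= N2' by apply: norm2_ge0.
have N100 : 0 <= N10 by apply: norm1_ge0.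
have hy0 : norm1 (c^-1 *: f0) = c^-1 * N10.
  rewrite /N10 /norm1 -mean_scale; apply: mean_ext => u.
  by rewrite ffunE normrM ger0_norm // invr_ge0 ltW.
rewrite hy0.
have hB : B <= N2' * s by apply: (@keyS _ _ _ _ _ _ hn (ltW hmu) hS).
have hN10 : N10 <= N20 * s.
  have -> : N10 = mean (fun u => `|f0 u| * (u \in S)%:R).
    apply: mean_ext => u; rewrite /S /supp inE.
    by case: eqP => [->|_]; rewrite ?normr0 ?mul0r ?mulr1.
  by apply: (@keyS _ _ _ _ _ _ hn (ltW hmu) hS).
have H1 : `|t| * N10 + (a + (-2) * B) <= L.
  have := @mean_le _ _ (fun u => `|t| * `|f0 u| + (`|f' u| + (-2) * (`|f' u| * (u \in S)%:R)))
    (fun u => `|(f' + t *: f0) u|).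
  rewrite mean_add mean_add !mean_scale; apply => u.
  have ev : (f' + t *: f0) u = f' u + t * f0 u :> R by rewrite !ffunE.
  rewrite ev.
  case hu: (u \in S).
    have := lerB_normD (t * f0 u) (f' u); rewrite normrM [t * f0 u + _]addrC mulr1; lra.
  move: hu; rewrite /S /supp inE => /negbFE/eqP e; have e' : f0 u = (0 : R) by exact: e.
  by rewrite e' normr0 !mulr0 !addr0 add0r.
have q0 : 0 < 1 - eps by rewrite subr_gt0.
have H8 : eta * alpha * s < (1 - eps) * (1 - 2 * alpha * s).
  have p0 : 0 < alpha * s by rewrite mulr_gt0.
  have h := hiv; rewrite -/s -(ltr_pM2r (mulr_gt0 p0 q0)) in h.
  have an : alpha != 0 by rewrite gt_eqF.
  have sn : s != 0 by rewrite gt_eqF.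
  have qn : 1 - eps != 0 by rewrite gt_eqF.
  have e1 : eta / (1-eps) * (alpha*s*(1-eps)) = eta*alpha*s by field; rewrite ?mulf_neq0.
  have e2 : ((alpha*s)^-1 - 2) * (alpha*s*(1-eps)) = (1-eps)*(1-2*alpha*s).
    by field; rewrite sn an.
  by rewrite e1 e2 in h.
have G1 : 1 - eta * N2' * N2f <= c * `|t|.
  have : c * t <= c * `|t| by rewrite ler_pM2l // real_ler_norm ?num_real.
  nra.
have G2 : (1 - eps) * N10 * N2f <= c * s.
  have r0 : 0 <= (1 - eps) * N2f by rewrite mulr_ge0 ?ltW.
  have p1 := ler_wpM2l r0 hN10.
  have p2 := ler_wpM2r (ltW s0) hii.
  nra.
rewrite -(ltr_pM2l c0) mulrA mulfV ?gt_eqF // mul1r.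
have pA := ler_wpM2l (mulr_ge0 (ltW q0) N100) G1.
have pB := ler_wpM2l (mulr_ge0 heta N2'0) G2.
have pC := ler_wpM2r (ltW s0) H3.
have pD := ler_wpM2l (mulr_ge0 (mulr_ge0 heta (ltW c0)) (ltW s0)) H3.
have pE := ler_wpM2l (ltW c0) H1.
have pF : 0 < c * a * ((1 - eps) * (1 - 2 * alpha * s) - eta * alpha * s).
  by apply: mulr_gt0; [exact: mulr_gt0 c0 a0 | rewrite subr_gt0].
have hB' : B <= alpha * a * s by apply: le_trans hB pC.
have pH := ler_wpM2l (mulr_ge0 (ltW q0) (ltW c0)) hB'.
have pG := ler_wpM2l (ltW q0) pE.
rewrite -(ltr_pM2l q0).
nra.
Qed.
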